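(* Let $n\ge 2$, let $a_1,\dots,a_n$ be distinct real numbers, and let $F(a)=\sum_{k=0}^n A_k a^k=\prod_{i=1}^n(a-a_i)$ (so $A_n=1$). Fix signs $\epsilon_i\in\{\pm1\}$ and real numbers $\xi_1,\dots,\xi_n$, put $\Delta_i=\epsilon_i(a-a_i)$ and $$x(a)=\sum_{i=1}^n\frac{\xi_i}{\sqrt{\Delta_i}},$$ and work on an open interval $I\subset(0,\infty)$ on which all $\Delta_i>0$ and $\dot x=dx/da\neq0$. On $M=I\times\mathbb{R}$ with coordinates $(a,y)$ consider $$H=\Pi^2+a\,P_y^2,\qquad \Pi=\frac{a}{\dot x}\,P_a .$$ Define $$G=\sum_{k=0}^n A_{n-k}H^{n-k}P_y^{2k},\quad Q_1=\sum_{k=1}^n\tilde b_k\,H^{n-k}\,\Pi\,P_y^{2k-1},\quad Q_2=\sum_{k=1}^n\tilde c_k\,H^{n-k}P_y^{2k},$$ where for $k=1,\dots,n$ $$\tilde b_k=(-1)^k\sum_{i=1}^n\frac{\xi_i}{\sqrt{\Delta_i}}\,\sigma^i_{k-1},\qquad \tilde c_k=\frac{(-1)^{k+1}}{2}\Big(\sum_{i=1}^n\frac{\xi_i^2}{\Delta_i}\sigma^i_{k-1}+\sum_{i\neq j}\frac{\xi_i\xi_j}{\sqrt{\Delta_i\Delta_j}}\big(\sigma^{ij}_{k-1}+a\,\sigma^{ij}_{k-2}\big)\Big),$$ and set $$S_1=Q_1+y\,G,\qquad S_2=Q_2+y\,Q_1+\frac{y^2}{2}G .$$ Then $\{H,P_y\}=\{H,S_1\}=\{H,S_2\}=0$,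 and each of the triples $(H,P_y,S_1)$ and $(H,P_y,S_2)$ is functionally independent (i.e. $dH\wedge dP_y\wedge dS_1$ and $dH\wedge dP_y\wedge dS_2$ do not vanish identically). Thus $\{H,P_y,S_1\}$ and $\{H,P_y,S_2\}$ are two maximally superintegrable systems.
   Context: $\{\cdot,\cdot\}$ is the canonical Poisson bracket on $T^*M$, $(P_a,P_y)$ being the momenta conjugate to $(a,y)$; $H$ is the geodesic Hamiltonian of the metric $g=\dot x^2a^{-2}da^2+a^{-1}dy^2$. The symmetric functions of the roots are defined as follows: $\sigma_k$ ($0\le k\le n$) by $\prod_{i=1}^n(a-a_i)=\sum_{k=0}^n(-1)^k\sigma_k a^{n-k}$; for each $i$, $\sigma^i_m$ ($-1\le m\le n$) by $\prod_{l\neq i}(a-a_l)=\sum_{m=0}^{n-1}(-1)^m\sigma^i_m a^{n-1-m}$ together with $\sigma^i_{-1}=\sigma^i_n=0$; for $i\neq j$, $\sigma^{ij}_m$ ($-2\le m\le n$) by $\prod_{l\neq i,j}(a-a_l)=\sum_{m=0}^{n-2}(-1)^m\sigma^{ij}_m a^{n-2-m}$ together with $\sigma^{ij}_{-2}=\sigma^{ij}_{-1}=\sigma^{ij}_{n-1}=\sigma^{ij}_n=0$. *)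

(* Defs.v *)
From Stdlib Require Import Reals Lra List Arith.
From Coquelicot Require Import Coquelicot.
Open Scope R_scope.

(* finite sum  sum_{k = m}^{m+len-1} f k *)
Definition rsum (m len : nat) (f : nat -> R) : R :=
  fold_right Rplus 0 (map f (seq m len)).

(* prodcoef l k = coefficient of X^k in  prod_{c in l} (X - c) *)
Fixpoint prodcoef (l : list R) (k : nat) : R :=
  match l with
  | nil => if Nat.eqb k 0 then 1 else 0
  | c :: l' => (match k with O => 0 | S k' => prodcoef l' k' end) - c * prodcoef l' k
  end.

(* sigma l m : defined by  prod_{c in l}(X - c) = sum_{m=0}^{N} (-1)^m sigma_m X^(N-m),
   N = length l, and sigma_m = 0 for m > N. *)
Definition sigma (l : list R) (m : nat) : R :=
  if Nat.leb m (length l) then (-1) ^ m * prodcoef l (length l - m) else 0.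

Definition sigma_pred (l : list R) (m : nat) : R :=
  match m with O => 0 | S m' => sigma l m' end.

Section Model.
Variables (n : nat) (ai : nat -> R) (eps : nat -> R) (xi : nat -> R).

(* roots a_1..a_n are indexed by 0..n-1 *)
Definition roots : list R := map ai (seq 0 n).
Definition roots_but (i : nat) : list R :=
  map ai (filter (fun l => negb (Nat.eqb l i)) (seq 0 n)).
Definition roots_but2 (i j : nat) : list R :=
  map ai (filter (fun l => andb (negb (Nat.eqb l i)) (negb (Nat.eqb l j))) (seq 0 n)).

Definition Acoef (k : nat) : R := prodcoef roots k.
Definition sig_i (i m : nat) : R := sigma (roots_but i) m.
Definition sig_ij (i j m : nat) : R := sigma (roots_but2 i j) m.
Definition sig_ij_pred (i j m : nat) : R := sigma_pred (roots_but2 i j) m.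

Definition Deltai (i : nat) (a : R) : R := eps i * (a - ai i).

Definition xfun (a : R) : R := rsum 0 n (fun i => xi i / sqrt (Deltai i a)).
Definition xdot (a : R) : R := Derive xfun a.

Definition btil (k : nat) (a : R) : R :=
  (-1) ^ k * rsum 0 n (fun i => xi i / sqrt (Deltai i a) * sig_i i (k - 1)).

Definition ctil (k : nat) (a : R) : R :=
  (-1) ^ (k + 1) / 2 *
  ( rsum 0 n (fun i => xi i ^ 2 / Deltai i a * sig_i i (k - 1))
  + rsum 0 n (fun i => rsum 0 n (fun j =>
      if Nat.eqb i j then 0 else
      xi i * xi j / sqrt (Deltai i a * Deltai j a) *
        (sig_ij i j (k - 1) + a * sig_ij_pred i j (k - 1)))) ).

Definition PiF (a y pa py : R) : R := a / xdot a * pa.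
Definition HF (a y pa py : R) : R := (PiF a y pa py) ^ 2 + a * py ^ 2.
Definition PyF (a y pa py : R) : R := py.

Definition GF (a y pa py : R) : R :=
  rsum 0 (S n) (fun k => Acoef (n - k) * (HF a y pa py) ^ (n - k) * py ^ (2 * k)).
Definition Q1F (a y pa py : R) : R :=
  rsum 1 n (fun k => btil k a * (HF a y pa py) ^ (n - k) * PiF a y pa py * py ^ (2 * k - 1)).
Definition Q2F (a y pa py : R) : R :=
  rsum 1 n (fun k => ctil k a * (HF a y pa py) ^ (n - k) * py ^ (2 * k)).

Definition S1F (a y pa py : R) : R := Q1F a y pa py + y * GF a y pa py.
Definition S2F (a y pa py : R) : R :=
  Q2F a y pa py + y * Q1F a y pa py + y ^ 2 / 2 * GF a y pa py.

End Model.

Definition dpart (c : nat) (f : R -> R -> R -> R -> R) (a y pa py : R) : R :=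
  match c with
  | 0%nat => Derive (fun t => f t y pa py) a
  | 1%nat => Derive (fun t => f a t pa py) y
  | 2%nat => Derive (fun t => f a y t py) pa
  | _ => Derive (fun t => f a y pa t) py
  end.

Definition pbracket (f g : R -> R -> R -> R -> R) (a y pa py : R) : R :=
  dpart 0 f a y pa py * dpart 2 g a y pa py - dpart 2 f a y pa py * dpart 0 g a y pa py
  + dpart 1 f a y pa py * dpart 3 g a y pa py - dpart 3 f a y pa py * dpart 1 g a y pa py.

Definition det3 (m11 m12 m13 m21 m22 m23 m31 m32 m33 : R) : R :=
  m11 * (m22 * m33 - m23 * m32) - m12 * (m21 * m33 - m23 * m31)
  + m13 * (m21 * m32 - m22 * m31).

(* component of df /\ dg /\ dh on d x^i /\ d x^j /\ d x^k *)
Definition wedge3_comp (f g h : R -> R -> R -> R -> R) (i j k : nat) (a y pa py : R) : R :=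
  det3 (dpart i f a y pa py) (dpart j f a y pa py) (dpart k f a y pa py)
       (dpart i g a y pa py) (dpart j g a y pa py) (dpart k g a y pa py)
       (dpart i h a y pa py) (dpart j h a y pa py) (dpart k h a y pa py).

(* functional independence on M = I x R : the 3-form df/\dg/\dh does not vanish
   identically on T*M, i.e. some coordinate component is nonzero at some point *)
Definition func_indep (I : R -> Prop) (f g h : R -> R -> R -> R -> R) : Prop :=
  exists a y pa py, I a /\
    exists i j k, (i < j)%nat /\ (j < k)%nat /\ (k < 4)%nat /\
      wedge3_comp f g h i j k a y pa py <> 0.

(* Main.v *)
Require Import Defs.
From Stdlib Require Import Reals List Arith Lra Lia Permutation.
From Coquelicot Require Import Coquelicot.
Import Defs.
Open Scope R_scope.


Lemma rsum_0 m f : rsum m 0 f = 0.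
Proof. reflexivity. Qed.
Lemma rsum_cons m len f : rsum m (S len) f = f m + rsum (S m) len f.
Proof. reflexivity. Qed.
Lemma rsum_snoc m len f : rsum m (S len) f = rsum m len f + f (m + len)%nat.
Proof.
  revert m; induction len; intro m.
  - unfold rsum; simpl. rewrite Nat.add_0_r; ring.
  - rewrite rsum_cons, IHlen, rsum_cons. replace (S m + len)%nat with (m + S len)%nat by lia. ring.
Qed.
Lemma rsum_ext m len f g : (forall k, (m <= k < m + len)%nat -> f k = g k) -> rsum m len f = rsum m len g.
Proof.
  revert m; induction len; intros m H; [reflexivity|].
  rewrite !rsum_cons. rewrite (H m) by lia. rewrite (IHlen (S m)); [reflexivity|].
  intros; apply H; lia.
Qed.
Lemma rsum_plus m len f g : rsum m len (fun k => f k + g k) = rsum m len f + rsum m len g.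
Proof. revert m; induction len; intro m; [unfold rsum; simpl; ring|]. rewrite !rsum_cons, IHlen; ring. Qed.
Lemma rsum_scal m len c f : rsum m len (fun k => c * f k) = c * rsum m len f.
Proof. revert m; induction len; intro m; [unfold rsum; simpl; ring|]. rewrite !rsum_cons, IHlen; ring. Qed.
Lemma rsum_zero m len f : (forall k, (m <= k < m + len)%nat -> f k = 0) -> rsum m len f = 0.
Proof. intro H. rewrite (rsum_ext m len f (fun _ => 0 * 0)). rewrite rsum_scal; ring.
 intros; rewrite H; auto; ring. Qed.
Lemma rsum_shift m len f : rsum (S m) len f = rsum m len (fun k => f (S k)).
Proof. revert m; induction len; intro m; [reflexivity|]. rewrite !rsum_cons, IHlen; reflexivity. Qed.
Lemma rsum_swap n F : rsum 0 n (fun i => rsum 0 n (fun j => F i j)) = rsum 0 n (fun j => rsum 0 n (fun i => F i j)).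
Proof.
  induction n; [reflexivity|].
  rewrite !rsum_snoc. simpl.
  rewrite (rsum_ext 0 n (fun i => rsum 0 (S n) (fun j => F i j)) (fun i => rsum 0 n (fun j => F i j) + F i n)).
  2:{ intros; rewrite rsum_snoc; reflexivity. }
  rewrite (rsum_ext 0 n (fun j => rsum 0 (S n) (fun i => F i j)) (fun j => rsum 0 n (fun i => F i j) + F n j)).
  2:{ intros; rewrite rsum_snoc; reflexivity. }
  rewrite !rsum_plus, IHn. change (rsum 0 n (F n)) with (rsum 0 n (fun j => F n j)). ring.
Qed.
Lemma rsum_delta n i v : (i < n)%nat -> rsum 0 n (fun j => if Nat.eqb i j then v j else 0) = v i.
Proof.
  induction n; intro H; [lia|]. rewrite rsum_snoc. simpl.
  destruct (Nat.eq_dec i n).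
  - subst. rewrite Nat.eqb_refl. rewrite rsum_zero; [ring|].
    intros k Hk. destruct (Nat.eqb_spec n k); [lia|reflexivity].
  - rewrite IHn by lia. destruct (Nat.eqb_spec i n); [lia|ring].
Qed.
Lemma is_derive_rsum m len (F : nat -> R -> R) (dF : nat -> R) x :
  (forall k, (m <= k < m + len)%nat -> is_derive (F k) x (dF k)) ->
  is_derive (fun t => rsum m len (fun k => F k t)) x (rsum m len dF).
Proof.
  revert m; induction len; intros m H.
  - unfold rsum; simpl. apply (is_derive_const (0:R) x).
  - rewrite rsum_cons. 
    apply (is_derive_ext (fun t => F m t + rsum (S m) len (fun k => F k t))).
    { intro; rewrite rsum_cons; reflexivity. }
    apply @is_derive_plus. apply H; lia. apply IHlen. intros; apply H; lia.
Qed.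


Lemma prodcoef_high l k : (length l < k)%nat -> prodcoef l k = 0.
Proof.
  revert k; induction l as [|c l IH]; intros k H; simpl in *.
  - destruct k; [lia|reflexivity].
  - destruct k; [lia|]. rewrite IH by lia. rewrite (IH (S k)) by lia. ring.
Qed.
Lemma prodcoef_top l : prodcoef l (length l) = 1.
Proof.
  induction l as [|c l IH]; simpl; [reflexivity|]. rewrite IH, prodcoef_high by lia. ring.
Qed.
Lemma prodcoef_swap x y l k : prodcoef (y :: x :: l) k = prodcoef (x :: y :: l) k.
Proof. destruct k as [|[|k]]; simpl; ring. Qed.
Lemma prodcoef_perm l l' : Permutation l l' -> forall k, prodcoef l k = prodcoef l' k.
Proof.
  induction 1 as [| x l l' H IH | x y l | l l' l'' H1 IH1 H2 IH2]; intro k.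
  - reflexivity.
  - destruct k; simpl; rewrite !IH; reflexivity.
  - apply prodcoef_swap.
  - rewrite IH1; apply IH2.
Qed.
Lemma sigma_perm l l' : Permutation l l' -> forall m, sigma l m = sigma l' m.
Proof.
  intros H m. unfold sigma. rewrite (Permutation_length H). rewrite (prodcoef_perm _ _ H). reflexivity.
Qed.
Lemma sigma_high l m : (length l < m)%nat -> sigma l m = 0.
Proof. intro H; unfold sigma. destruct (Nat.leb_spec m (length l)); [lia|reflexivity]. Qed.
Lemma sigma_cons c l m : sigma (c :: l) m = sigma l m + c * sigma_pred l m.
Proof.
  unfold sigma_pred. unfold sigma at 1. simpl length.
  destruct m as [|m].
  - unfold sigma. simpl. rewrite !Nat.sub_0_r, prodcoef_top, prodcoef_high by lia. ring.
  - destruct (Nat.leb_spec (S m) (S (length l))).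
    + unfold sigma. destruct (Nat.leb_spec m (length l)); [|lia].
      replace (S (length l) - S m)%nat with (length l - m)%nat by lia.
      destruct (length l - m)%nat eqn:E.
      * destruct (Nat.leb_spec (S m) (length l)); [lia|]. simpl. ring.
      * destruct (Nat.leb_spec (S m) (length l)); [|lia].
        replace (length l - S m)%nat with n by lia. simpl. ring.
    + rewrite !sigma_high by lia. ring.
Qed.

Lemma perm_filter_out (i : nat) l : NoDup l -> In i l ->
  Permutation l (i :: filter (fun x => negb (Nat.eqb x i)) l).
Proof.
  induction l as [|x l IH]; intros Hnd Hin; [destruct Hin|].
  inversion Hnd; subst. simpl. destruct (Nat.eqb_spec x i).
  - subst. simpl. rewrite (forallb_filter_id _ _). reflexivity.
    apply forallb_forall. intros y Hy. destruct (Nat.eqb_spec y i); [subst; contradiction|reflexivity].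
  - simpl. destruct Hin as [Hin|Hin]; [congruence|].
    eapply perm_trans. apply perm_skip. apply IH; auto. apply perm_swap.
Qed.

Lemma roots_perm n ai i : (i < n)%nat -> Permutation (roots n ai) (ai i :: roots_but n ai i).
Proof.
  intro H. unfold roots, roots_but. change (ai i :: map ai (filter (fun l => negb (l =? i)) (seq 0 n)))
   with (map ai (i :: filter (fun l => negb (l =? i)) (seq 0 n))).
  apply Permutation_map, perm_filter_out. apply seq_NoDup. apply in_seq; lia.
Qed.
Lemma filter_filter2 (s : list nat) i j :
  filter (fun l => negb (l =? j)) (filter (fun l => negb (l =? i)) s) =
  filter (fun l => andb (negb (l =? i)) (negb (l =? j))) s.
Proof. induction s as [|x s IH]; simpl; [reflexivity|].
  destruct (x =? i); simpl; [exact IH|]. destruct (x =? j); simpl; rewrite IH; reflexivity. Qed.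
Lemma filter_filter3 (s : list nat) i j :
  filter (fun l => negb (l =? i)) (filter (fun l => negb (l =? j)) s) =
  filter (fun l => andb (negb (l =? i)) (negb (l =? j))) s.
Proof. induction s as [|x s IH]; simpl; [reflexivity|].
  destruct (x =? j) eqn:E; simpl; [rewrite IH; destruct (x =? i); reflexivity|].
  destruct (x =? i); simpl; rewrite IH; reflexivity. Qed.
Lemma roots_but_perm n ai i j : (i < n)%nat -> (j < n)%nat -> i <> j ->
  Permutation (roots_but n ai i) (ai j :: roots_but2 n ai i j).
Proof.
  intros Hi Hj Hij. unfold roots_but, roots_but2. rewrite <- filter_filter2.
  change (ai j :: map ai (filter (fun l => negb (l =? j)) (filter (fun l => negb (l =? i)) (seq 0 n))))
   with (map ai (j :: filter (fun l => negb (l =? j)) (filter (fun l => negb (l =? i)) (seq 0 n)))).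
  apply Permutation_map, perm_filter_out. apply NoDup_filter, seq_NoDup.
  apply filter_In. split. apply in_seq; lia. destruct (Nat.eqb_spec j i); [lia|reflexivity].
Qed.
Lemma roots_but_perm' n ai i j : (i < n)%nat -> (j < n)%nat -> i <> j ->
  Permutation (roots_but n ai j) (ai i :: roots_but2 n ai i j).
Proof.
  intros Hi Hj Hij. unfold roots_but, roots_but2. rewrite <- filter_filter3.
  change (ai i :: map ai (filter (fun l => negb (l =? i)) (filter (fun l => negb (l =? j)) (seq 0 n))))
   with (map ai (i :: filter (fun l => negb (l =? i)) (filter (fun l => negb (l =? j)) (seq 0 n)))).
  apply Permutation_map, perm_filter_out. apply NoDup_filter, seq_NoDup.
  apply filter_In. split. apply in_seq; lia. destruct (Nat.eqb_spec i j); [lia|reflexivity].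
Qed.
Lemma length_roots_but n ai i : (i < n)%nat -> length (roots_but n ai i) = (n - 1)%nat.
Proof.
  intro H. pose proof (Permutation_length (roots_perm n ai i H)). unfold roots in H0 at 1.
  rewrite length_map, length_seq in H0. simpl in H0. lia.
Qed.
Lemma R1 n ai i k : (i < n)%nat -> (k <= n)%nat ->
  Acoef n ai (n - k) = (-1) ^ k * (sigma_pred (roots_but n ai i) (S k) + ai i * sigma_pred (roots_but n ai i) k).
Proof.
  intros Hi Hk. unfold Acoef. rewrite (prodcoef_perm _ _ (roots_perm n ai i Hi)).
  simpl sigma_pred at 1. rewrite <- sigma_cons.
  unfold sigma. simpl length. rewrite length_roots_but by auto.
  destruct (Nat.leb_spec k (S (n - 1))); [|lia].
  replace (S (n - 1) - k)%nat with (n - k)%nat by lia.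
  rewrite <- Rmult_assoc, <- pow_add. replace (k + k)%nat with (2 * k)%nat by lia.
  rewrite pow_1_even. ring.
Qed.
Lemma R2 n ai i j m : (i < n)%nat -> (j < n)%nat -> i <> j ->
  sig_i n ai i m = sig_ij n ai i j m + ai j * sig_ij_pred n ai i j m.
Proof.
  intros. unfold sig_i, sig_ij, sig_ij_pred. rewrite (sigma_perm _ _ (roots_but_perm n ai i j H H0 H1)).
  apply sigma_cons.
Qed.
Lemma R3 n ai i j m : (i < n)%nat -> (j < n)%nat -> i <> j ->
  sig_i n ai j m = sig_ij n ai i j m + ai i * sig_ij_pred n ai i j m.
Proof.
  intros. unfold sig_i, sig_ij, sig_ij_pred. rewrite (sigma_perm _ _ (roots_but_perm' n ai i j H H0 H1)).
  apply sigma_cons.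
Qed.
Lemma sp_top n ai i : (i < n)%nat -> sigma_pred (roots_but n ai i) (S n) = 0.
Proof. intro H. simpl. apply sigma_high. rewrite length_roots_but by auto. lia. Qed.
Lemma Acoef_top n ai : Acoef n ai n = 1.
Proof. unfold Acoef. replace n with (length (roots n ai)) at 2. apply prodcoef_top.
  unfold roots; rewrite length_map, length_seq; reflexivity. Qed.


Definition Hv (rr : R -> R) a pa p := (rr a * pa)^2 + a * p^2.
Definition HtV (rr : R -> R) r' a pa p := 2 * (rr a * pa) * (r' * pa) + p^2.
Definition HpV (rr : R -> R) a pa := 2 * (rr a * pa) * rr a.
Definition DTv (rr : R -> R) r' (beta : R -> R) b' a pa p C m e :=
  (b' * Hv rr a pa p ^ m * (rr a * pa)^e
   + beta a * (INR m * HtV rr r' a pa p * Hv rr a pa p ^ pred m) * (rr a * pa)^e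
   + beta a * Hv rr a pa p ^ m * (INR e * (r' * pa) * (rr a * pa)^pred e)) * C.
Definition DPv (rr : R -> R) (beta : R -> R) a pa p C m e :=
  (beta a * (INR m * HpV rr a pa * Hv rr a pa p ^ pred m) * (rr a * pa)^e
   + beta a * Hv rr a pa p ^ m * (INR e * rr a * (rr a * pa)^pred e)) * C.

Lemma key_t rr r' beta b' a pa p C m e :
  is_derive rr a r' -> is_derive beta a b' ->
  is_derive (fun t => beta t * ((rr t * pa)^2 + t * p^2)^m * (rr t * pa)^e * C) a
    (DTv rr r' beta b' a pa p C m e).
Proof.
  intros Hr Hb. auto_derive.
  - repeat split; eexists; eauto.
  - replace (Derive (fun x => rr x) a) with r' by (symmetry; apply is_derive_unique; exact Hr).
    replace (Derive (fun x => beta x) a) with b' by (symmetry; apply is_derive_unique; exact Hb).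
    unfold DTv, HtV, Hv. simpl. ring.
Qed.
Lemma key_p (rr : R -> R) (beta : R -> R) a pa p C m e :
  is_derive (fun q => beta a * ((rr a * q)^2 + a * p^2)^m * (rr a * q)^e * C) pa
    (DPv rr beta a pa p C m e).
Proof.
  auto_derive; [exact I|]. unfold DPv, HpV, Hv. simpl. ring.
Qed.
Lemma key_id rr r' beta b' a pa p C m e :
  HtV rr r' a pa p * DPv rr beta a pa p C m e - HpV rr a pa * DTv rr r' beta b' a pa p C m e
  = C * rr a * Hv rr a pa p ^ m * (beta a * INR e * (rr a * pa)^(pred e) * p^2 - 2 * b' * (rr a * pa) * (rr a * pa)^e).
Proof. unfold DPv, DTv, HtV, HpV. ring. Qed.


Definition fi (ai eps xi : nat -> R) i t := xi i / sqrt (Deltai ai eps i t).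
Definition fdi (ai eps xi : nat -> R) i t :=
  - xi i * eps i / (2 * Deltai ai eps i t * sqrt (Deltai ai eps i t)).

Lemma d_fi ai eps xi i a : 0 < Deltai ai eps i a ->
  is_derive (fun t => xi i / sqrt (Deltai ai eps i t)) a (fdi ai eps xi i a).
Proof.
  intro H. unfold fdi. unfold Deltai in *. auto_derive.
  - split; [exact H|]. split; [|exact I]. apply Rgt_not_eq, sqrt_lt_R0; exact H.
  - replace (a + - ai i) with (a - ai i) by ring.
    pose proof (sqrt_lt_R0 _ H). pose proof (sqrt_sqrt _ (Rlt_le _ _ H)).
    set (g := sqrt (eps i * (a - ai i))) in *. rewrite <- H1. field. lra.
Qed.
Lemma fdi_rel ai eps xi i a : 0 < Deltai ai eps i a ->
  fdi ai eps xi i a * (a - ai i) = - fi ai eps xi i a / 2.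
Proof.
  intro H. unfold fdi, fi. pose proof (sqrt_lt_R0 _ H).
  unfold Deltai in *. field.
  split; [lra|]. split; intro Hz; rewrite Hz in H; lra.
Qed.
Lemma xdot_val n ai eps xi a : (forall i, (i < n)%nat -> 0 < Deltai ai eps i a) ->
  xdot n ai eps xi a = rsum 0 n (fun i => fdi ai eps xi i a).
Proof.
  intro H. unfold xdot. apply is_derive_unique. unfold xfun.
  apply (is_derive_rsum 0 n (fun i t => xi i / sqrt (Deltai ai eps i t))).
  intros; apply d_fi, H; lia.
Qed.
Lemma ex_derive_fdi ai eps xi i a : 0 < Deltai ai eps i a -> ex_derive (fdi ai eps xi i) a.
Proof.
  intro H. unfold fdi, Deltai in *. auto_derive.
  pose proof (sqrt_lt_R0 _ H). repeat split; auto.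
  apply Rgt_not_eq. apply Rmult_lt_0_compat; [lra|auto].
Qed.
Lemma ex_derive_xdot n ai eps xi (I : R -> Prop) a : open I -> I a ->
  (forall t i, I t -> (i < n)%nat -> 0 < Deltai ai eps i t) ->
  ex_derive (xdot n ai eps xi) a.
Proof.
  intros Ho Ha HD.
  assert (Hl : locally a (fun t => rsum 0 n (fun i => fdi ai eps xi i t) = xdot n ai eps xi t)).
  { generalize (Ho a Ha). apply filter_imp. intros t Ht. symmetry; apply xdot_val. intros; apply HD; auto. }
  eexists. eapply is_derive_ext_loc. exact Hl.
  apply (is_derive_rsum 0 n (fun i t => fdi ai eps xi i t) (fun i => Derive (fdi ai eps xi i) a)).
  intros k Hk. apply Derive_correct, ex_derive_fdi, HD; auto; lia.
Qed.
Lemma ex_derive_rr n ai eps xi (I : R -> Prop) a : open I -> I a ->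
  (forall t i, I t -> (i < n)%nat -> 0 < Deltai ai eps i t) -> xdot n ai eps xi a <> 0 ->
  ex_derive (fun t => t / xdot n ai eps xi t) a.
Proof.
  intros Ho Ha HD Hx. pose proof (ex_derive_xdot n ai eps xi I a Ho Ha HD).
  auto_derive. repeat split; auto.
Qed.

Lemma is_derive_mulc (f : R -> R) x l c : is_derive f x l -> is_derive (fun t => f t * c) x (l * c).
Proof. intro H. replace (l * c) with (c * l) by ring.
  apply (is_derive_ext (fun t => c * f t)); [intro t; apply Rmult_comm|]. apply is_derive_scal; auto. Qed.

Definition Bd n ai eps xi k a := (-1) ^ k * rsum 0 n (fun i => fdi ai eps xi i a * sig_i n ai i (k - 1)).
Lemma d_btil n ai eps xi k a : (forall i, (i < n)%nat -> 0 < Deltai ai eps i a) ->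
  is_derive (fun t => btil n ai eps xi k t) a (Bd n ai eps xi k a).
Proof.
  intro H. unfold btil, Bd. apply is_derive_scal.
  apply (is_derive_rsum 0 n (fun i t => xi i / sqrt (Deltai ai eps i t) * sig_i n ai i (k - 1))).
  intros i Hi. apply is_derive_mulc, d_fi, H; lia.
Qed.

Lemma d_diag ai eps xi i a s : 0 < Deltai ai eps i a ->
  is_derive (fun t => xi i ^ 2 / Deltai ai eps i t * s) a (2 * fi ai eps xi i a * fdi ai eps xi i a * s).
Proof.
  intro H. apply is_derive_mulc. unfold fi, fdi. unfold Deltai in *. auto_derive.
  - replace (a + - ai i) with (a - ai i) by ring. lra.
  - replace (a + - ai i) with (a - ai i) by ring.
    pose proof (sqrt_lt_R0 _ H). pose proof (sqrt_sqrt _ (Rlt_le _ _ H)).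
    set (g := sqrt (eps i * (a - ai i))) in *. rewrite <- H1. field. lra.
Qed.
Lemma d_off ai eps xi i j a s1 s2 : 0 < Deltai ai eps i a -> 0 < Deltai ai eps j a ->
  is_derive (fun t => xi i * xi j / sqrt (Deltai ai eps i t * Deltai ai eps j t) * (s1 + t * s2)) a
    ((fdi ai eps xi i a * fi ai eps xi j a + fi ai eps xi i a * fdi ai eps xi j a) * (s1 + a * s2)
     + fi ai eps xi i a * fi ai eps xi j a * s2).
Proof.
  intros Hi Hj. unfold fi, fdi. unfold Deltai in *. auto_derive.
  - split; [nra|]. split; [|exact I]. apply Rgt_not_eq, sqrt_lt_R0; nra.
  - replace (a + - ai i) with (a - ai i) by ring. replace (a + - ai j) with (a - ai j) by ring.
    rewrite sqrt_mult by lra.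
    pose proof (sqrt_lt_R0 _ Hi). pose proof (sqrt_sqrt _ (Rlt_le _ _ Hi)).
    pose proof (sqrt_lt_R0 _ Hj). pose proof (sqrt_sqrt _ (Rlt_le _ _ Hj)).
    set (g := sqrt (eps i * (a - ai i))) in *. set (h := sqrt (eps j * (a - ai j))) in *.
    rewrite <- H0, <- H2. field. lra.
Qed.

Definition Cd n ai eps xi k a :=
  (-1) ^ (k + 1) / 2 *
  ( rsum 0 n (fun i => 2 * fi ai eps xi i a * fdi ai eps xi i a * sig_i n ai i (k - 1))
  + rsum 0 n (fun i => rsum 0 n (fun j =>
      if Nat.eqb i j then 0 else
      (fdi ai eps xi i a * fi ai eps xi j a + fi ai eps xi i a * fdi ai eps xi j a)
        * (sig_ij n ai i j (k - 1) + a * sig_ij_pred n ai i j (k - 1))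
      + fi ai eps xi i a * fi ai eps xi j a * sig_ij_pred n ai i j (k - 1)))).
Lemma d_ctil n ai eps xi k a : (forall i, (i < n)%nat -> 0 < Deltai ai eps i a) ->
  is_derive (fun t => ctil n ai eps xi k t) a (Cd n ai eps xi k a).
Proof.
  intro H. unfold ctil, Cd. apply is_derive_scal. apply @is_derive_plus.
  - apply (is_derive_rsum 0 n (fun i t => xi i ^ 2 / Deltai ai eps i t * sig_i n ai i (k - 1))).
    intros i Hi. apply d_diag, H; lia.
  - apply (is_derive_rsum 0 n (fun i t => rsum 0 n (fun j => if Nat.eqb i j then 0 else
      xi i * xi j / sqrt (Deltai ai eps i t * Deltai ai eps j t) *
        (sig_ij n ai i j (k - 1) + t * sig_ij_pred n ai i j (k - 1))))).
    intros i Hi. apply (is_derive_rsum 0 n (fun j t => if Nat.eqb i j then 0 else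
      xi i * xi j / sqrt (Deltai ai eps i t * Deltai ai eps j t) *
        (sig_ij n ai i j (k - 1) + t * sig_ij_pred n ai i j (k - 1)))).
    intros j Hj. destruct (Nat.eqb i j).
    + apply (is_derive_const (0:R) a).
    + apply d_off; apply H; lia.
Qed.


Lemma rsum_comb4 m len c1 c2 c3 c4 f1 f2 f3 f4 :
  c1 * rsum m len f1 + c2 * rsum m len f2 + c3 * rsum m len f3 + c4 * rsum m len f4 =
  rsum m len (fun i => c1 * f1 i + c2 * f2 i + c3 * f3 i + c4 * f4 i).
Proof. rewrite !rsum_plus, !rsum_scal. reflexivity. Qed.
Lemma rsum_mul m len f g : rsum m len f * rsum m len g = rsum m len (fun i => rsum m len (fun j => f i * g j)).
Proof. rewrite (Rmult_comm (rsum m len f)), <- (rsum_scal m len (rsum m len g) f). apply rsum_ext. intros. rewrite Rmult_comm, <- rsum_scal.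
  apply rsum_ext; intros; ring. Qed.

Definition sp n ai i k := sigma_pred (roots_but n ai i) k.
Definition Bh n ai eps xi k a := (-1) ^ k * rsum 0 n (fun i => fi ai eps xi i a * sp n ai i k).
Definition Bdh n ai eps xi k a := (-1) ^ k * rsum 0 n (fun i => fdi ai eps xi i a * sp n ai i k).

Lemma S1id n ai eps xi k a : (forall i, (i < n)%nat -> 0 < Deltai ai eps i a) -> (k <= n)%nat ->
  Bh n ai eps xi k a + 2 * a * Bdh n ai eps xi k a - 2 * Bdh n ai eps xi (S k) a
  = 2 * xdot n ai eps xi a * Acoef n ai (n - k).
Proof.
  intros HD Hk. rewrite xdot_val by auto. unfold Bh, Bdh.
  apply Rminus_diag_uniq.
  transitivity ((-1)^k * rsum 0 n (fun i => fi ai eps xi i a * sp n ai i k)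
     + (2 * a * (-1)^k) * rsum 0 n (fun i => fdi ai eps xi i a * sp n ai i k)
     + (- 2 * (-1) ^ S k) * rsum 0 n (fun i => fdi ai eps xi i a * sp n ai i (S k))
     + (- 2 * Acoef n ai (n - k)) * rsum 0 n (fun i => fdi ai eps xi i a)).
  { ring. }
  rewrite rsum_comb4. apply rsum_zero. intros i Hi.
  rewrite (R1 n ai i k) by lia. fold (sp n ai i (S k)). fold (sp n ai i k).
  pose proof (fdi_rel ai eps xi i a (HD i ltac:(lia))).
  replace (fi ai eps xi i a) with (-2 * (fdi ai eps xi i a * (a - ai i))) by lra.
  simpl pow. ring.
Qed.

Lemma S2id n ai eps xi k a : (forall i, (i < n)%nat -> 0 < Deltai ai eps i a) ->
  Cd n ai eps xi k a = - xdot n ai eps xi a * btil n ai eps xi k a.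
Proof.
  intros HD. rewrite xdot_val by auto. unfold Cd, btil.
  change (fun i => xi i / sqrt (Deltai ai eps i a) * sig_i n ai i (k - 1))
    with (fun i => fi ai eps xi i a * sig_i n ai i (k - 1)).
  set (fI := fi ai eps xi). set (fD := fdi ai eps xi).
  pose (g := fun i j => fI i a * fD j a * sig_i n ai i (k - 1)).
  assert (E1 : rsum 0 n (fun j => fD j a) * rsum 0 n (fun i => fI i a * sig_i n ai i (k - 1))
     = rsum 0 n (fun i => fI i a * fD i a * sig_i n ai i (k - 1))
       + rsum 0 n (fun i => rsum 0 n (fun j => if Nat.eqb i j then 0 else g i j))).
  { rewrite Rmult_comm, rsum_mul, <- rsum_plus. apply rsum_ext. intros i Hi.
    rewrite <- (rsum_delta n i (fun j => fI i a * fD j a * sig_i n ai i (k - 1))) by lia.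
    rewrite <- rsum_plus. apply rsum_ext. intros j Hj. unfold g.
    destruct (Nat.eqb i j); ring. }
  assert (E2 : rsum 0 n (fun i => rsum 0 n (fun j => if Nat.eqb i j then 0 else g i j))
     = / 2 * rsum 0 n (fun i => rsum 0 n (fun j => if Nat.eqb i j then 0 else g i j + g j i))).
  { assert (Sw : rsum 0 n (fun i => rsum 0 n (fun j => if Nat.eqb i j then 0 else g j i))
              = rsum 0 n (fun i => rsum 0 n (fun j => if Nat.eqb i j then 0 else g i j))).
    { rewrite rsum_swap. apply rsum_ext; intros i Hi. apply rsum_ext; intros j Hj.
      rewrite Nat.eqb_sym. reflexivity. }
    rewrite (rsum_ext 0 n (fun i => rsum 0 n (fun j => if Nat.eqb i j then 0 else g i j + g j i)) (fun i => rsum 0 n (fun j => if Nat.eqb i j then 0 else g i j)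
        + rsum 0 n (fun j => if Nat.eqb i j then 0 else g j i))).
    2:{ intros i Hi. rewrite <- rsum_plus. apply rsum_ext; intros j Hj. destruct (Nat.eqb i j); ring. }
    rewrite rsum_plus, Sw. field. }
  rewrite E2 in E1.
  replace (- rsum 0 n (fun j => fD j a) * ((-1) ^ k * rsum 0 n (fun i => fI i a * sig_i n ai i (k - 1))))
    with ((-1) ^ (k + 1) * (rsum 0 n (fun j => fD j a) * rsum 0 n (fun i => fI i a * sig_i n ai i (k - 1))))
    by (rewrite pow_add; ring).
  rewrite E1.
  replace (rsum 0 n (fun i => 2 * fI i a * fD i a * sig_i n ai i (k - 1))) with
    (2 * rsum 0 n (fun i => fI i a * fD i a * sig_i n ai i (k - 1))) by (rewrite <- rsum_scal; apply rsum_ext; intros; ring).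
  assert (E3 : rsum 0 n (fun i => rsum 0 n (fun j => if Nat.eqb i j then 0 else
      (fD i a * fI j a + fI i a * fD j a) * (sig_ij n ai i j (k - 1) + a * sig_ij_pred n ai i j (k - 1))
       + fI i a * fI j a * sig_ij_pred n ai i j (k - 1)))
    = rsum 0 n (fun i => rsum 0 n (fun j => if Nat.eqb i j then 0 else g i j + g j i))).
  { apply rsum_ext; intros i Hi. apply rsum_ext; intros j Hj.
    destruct (Nat.eqb_spec i j); [reflexivity|].
    unfold g. rewrite (R2 n ai i j) by lia. rewrite (R3 n ai i j) by lia.
    pose proof (fdi_rel ai eps xi i a (HD i ltac:(lia))).
    pose proof (fdi_rel ai eps xi j a (HD j ltac:(lia))).
    fold fD fI in H, H0.
    replace (fI i a) with (-2 * (fD i a * (a - ai i))) by lra.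
    replace (fI j a) with (-2 * (fD j a * (a - ai j))) by lra. ring. }
  rewrite E3. field.
Qed.
Lemma btil_Bh n ai eps xi k a : btil n ai eps xi (S k) a = Bh n ai eps xi (S k) a.
Proof. unfold btil, Bh. f_equal. apply rsum_ext. intros i _. unfold fi, sp, sig_i. simpl. rewrite Nat.sub_0_r. reflexivity. Qed.
Lemma Bd_Bdh n ai eps xi k a : Bd n ai eps xi (S k) a = Bdh n ai eps xi (S k) a.
Proof. unfold Bd, Bdh. f_equal. apply rsum_ext. intros i _. unfold sp, sig_i. simpl. rewrite Nat.sub_0_r. reflexivity. Qed.


Lemma pow_split x a b c : (a = b + c)%nat -> x ^ a = x ^ b * x ^ c.
Proof. intro; subst; apply pow_add. Qed.

Lemma tele n (Bh Bdh A : nat -> R) X a H p P :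
  H = P^2 + a*p^2 -> Bh 0%nat = 0 -> Bdh 0%nat = 0 -> Bdh (S n) = 0 ->
  (forall k, (k <= n)%nat -> Bh k + 2*a*Bdh k - 2*Bdh (S k) = 2*X*A (n-k)%nat) ->
  rsum 1 n (fun k => p^(2*k-1) * H^(n-k) * (Bh k * p^2 - 2*Bdh k*P^2))
  = 2*X*p* rsum 0 (S n) (fun k => A (n-k)%nat * H^(n-k) * p^(2*k)).
Proof.
  intros HH B0 Bd0 Bdn Hrel.
  set (T := fun k => p^(2*k-1) * H^(n-k) * (Bh k * p^2 - 2*Bdh k*P^2)).
  set (U := fun k => p^(2*k-1) * H^(n-k+1) * Bdh k).
  set (V := fun k => p^(2*k+1) * H^(n-k) * (Bh k + 2*a*Bdh k)).
  set (W := fun k => p^(2*k+1) * H^(n-k) * Bdh (S k)).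
  assert (E1 : rsum 1 n T = rsum 0 (S n) T).
  { rewrite rsum_cons. unfold T at 2. rewrite B0, Bd0. ring. }
  assert (E2 : rsum 0 (S n) T = rsum 0 (S n) V + (-2) * rsum 0 (S n) U).
  { rewrite <- rsum_scal, <- rsum_plus. apply rsum_ext. intros k Hk.
    unfold T, U, V. destruct k as [|k].
    - rewrite B0, Bd0. ring.
    - rewrite (pow_split p (2 * S k + 1) (2 * S k - 1) 2) by lia.
      destruct (Nat.le_gt_cases (S k) n).
      + rewrite (pow_split H (n - S k + 1) (n - S k) 1) by lia.
        rewrite HH. ring.
      + lia. }
  assert (E3 : rsum 0 (S n) U = rsum 0 (S n) W).
  { rewrite rsum_cons, rsum_snoc, Nat.add_0_l. unfold U at 1. rewrite Bd0. unfold W at 2. rewrite Bdn.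
    rewrite rsum_shift. rewrite !Rmult_0_r, Rplus_0_l, Rplus_0_r. apply rsum_ext. intros k Hk.
    unfold U, W. replace (2 * S k - 1)%nat with (2 * k + 1)%nat by lia.
    replace (n - S k + 1)%nat with (n - k)%nat by lia. reflexivity. }
  rewrite E1, E2, E3. rewrite <- rsum_scal, <- rsum_plus.
  rewrite <- !rsum_scal. apply rsum_ext. intros k Hk. unfold V, W.
  replace (p ^ (2 * k + 1)) with (p * p ^ (2 * k)) by (rewrite <- (pow_1 p) at 1; rewrite <- pow_add; f_equal; lia).
  transitivity (p * p ^ (2 * k) * H ^ (n - k) * (Bh k + 2 * a * Bdh k - 2 * Bdh (S k))); [ring|].
  rewrite Hrel by lia. ring.
Qed.


Definition rrf n ai eps xi := fun t => t / xdot n ai eps xi t.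

Lemma key_t' rr r' beta b' a pa p C m e (F : R -> R) :
  is_derive rr a r' -> is_derive beta a b' ->
  (forall t, beta t * ((rr t * pa)^2 + t * p^2)^m * (rr t * pa)^e * C = F t) ->
  is_derive F a (DTv rr r' beta b' a pa p C m e).
Proof. intros H1 H2 H3. eapply is_derive_ext. exact H3. apply key_t; auto. Qed.
Lemma key_p' rr beta a pa p C m e (F : R -> R) :
  (forall q, beta a * ((rr a * q)^2 + a * p^2)^m * (rr a * q)^e * C = F q) ->
  is_derive F pa (DPv rr beta a pa p C m e).
Proof. intros H3. eapply is_derive_ext. exact H3. apply key_p; auto. Qed.

Lemma Xsum m len (DP DT : nat -> R) Ht Hp :
  Ht * rsum m len DP - Hp * rsum m len DT = rsum m len (fun k => Ht * DP k - Hp * DT k).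
Proof. transitivity (rsum m len (fun k => Ht * DP k) + rsum m len (fun k => - Hp * DT k)).
  { rewrite !rsum_scal; ring. }
  rewrite <- rsum_plus; apply rsum_ext; intros; ring. Qed.

Section Main.
Variables (n : nat) (ai eps xi : nat -> R) (a y pa py r' : R).
Hypothesis HD : forall i, (i < n)%nat -> 0 < Deltai ai eps i a.
Hypothesis Hr : is_derive (rrf n ai eps xi) a r'.
Let rr := rrf n ai eps xi.

Lemma dQ1_t : is_derive (fun t => Q1F n ai eps xi t y pa py) a
  (rsum 1 n (fun k => DTv rr r' (btil n ai eps xi k) (Bd n ai eps xi k a) a pa py (py^(2*k-1)) (n-k) 1)).
Proof.
  unfold Q1F. apply (is_derive_rsum 1 n (fun k t => btil n ai eps xi k t * HF n ai eps xi t y pa py ^ (n - k) *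
     PiF n ai eps xi t y pa py * py ^ (2 * k - 1))).
  intros k Hk. apply key_t'; auto. apply d_btil; auto.
  intro t. unfold HF, PiF, rr, rrf. simpl. ring.
Qed.
Lemma dQ1_p : is_derive (fun q => Q1F n ai eps xi a y q py) pa
  (rsum 1 n (fun k => DPv rr (btil n ai eps xi k) a pa py (py^(2*k-1)) (n-k) 1)).
Proof.
  unfold Q1F. apply (is_derive_rsum 1 n (fun k q => btil n ai eps xi k a * HF n ai eps xi a y q py ^ (n - k) *
     PiF n ai eps xi a y q py * py ^ (2 * k - 1))).
  intros k Hk. apply key_p'.
  intro t. unfold HF, PiF, rr, rrf. simpl. ring.
Qed.
Lemma dG_t : is_derive (fun t => GF n ai eps xi t y pa py) a
  (rsum 0 (S n) (fun k => DTv rr r' (fun _ => Acoef n ai (n - k)) 0 a pa py (py^(2*k)) (n-k) 0)).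
Proof.
  unfold GF. apply (is_derive_rsum 0 (S n) (fun k t => Acoef n ai (n - k) * HF n ai eps xi t y pa py ^ (n - k) * py ^ (2 * k))).
  intros k Hk. apply key_t'; auto. apply (is_derive_const (Acoef n ai (n - k)) a).
  intro t. unfold HF, PiF, rr, rrf. simpl. ring.
Qed.
Lemma dG_p : is_derive (fun q => GF n ai eps xi a y q py) pa
  (rsum 0 (S n) (fun k => DPv rr (fun _ => Acoef n ai (n - k)) a pa py (py^(2*k)) (n-k) 0)).
Proof.
  unfold GF. apply (is_derive_rsum 0 (S n) (fun k q => Acoef n ai (n - k) * HF n ai eps xi a y q py ^ (n - k) * py ^ (2 * k))).
  intros k Hk. apply key_p'.
  intro t. unfold HF, PiF, rr, rrf. simpl. ring.
Qed.
Lemma dQ2_t : is_derive (fun t => Q2F n ai eps xi t y pa py) a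
  (rsum 1 n (fun k => DTv rr r' (ctil n ai eps xi k) (Cd n ai eps xi k a) a pa py (py^(2*k)) (n-k) 0)).
Proof.
  unfold Q2F. apply (is_derive_rsum 1 n (fun k t => ctil n ai eps xi k t * HF n ai eps xi t y pa py ^ (n - k) * py ^ (2 * k))).
  intros k Hk. apply key_t'; auto. apply d_ctil; auto.
  intro t. unfold HF, PiF, rr, rrf. simpl. ring.
Qed.
Lemma dQ2_p : is_derive (fun q => Q2F n ai eps xi a y q py) pa
  (rsum 1 n (fun k => DPv rr (ctil n ai eps xi k) a pa py (py^(2*k)) (n-k) 0)).
Proof.
  unfold Q2F. apply (is_derive_rsum 1 n (fun k q => ctil n ai eps xi k a * HF n ai eps xi a y q py ^ (n - k) * py ^ (2 * k))).
  intros k Hk. apply key_p'.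
  intro t. unfold HF, PiF, rr, rrf. simpl. ring.
Qed.

Lemma dH0 : dpart 0 (HF n ai eps xi) a y pa py = HtV rr r' a pa py.
Proof.
  simpl. apply is_derive_unique. unfold HF, PiF.
  apply (is_derive_ext (fun t => (rr t * pa)^2 + t * py^2)); [intro; reflexivity|].
  auto_derive. eexists; exact Hr.
  replace (Derive (fun x => rr x) a) with r' by (symmetry; apply is_derive_unique; exact Hr).
  unfold HtV. ring.
Qed.
Lemma dH1 : dpart 1 (HF n ai eps xi) a y pa py = 0.
Proof. simpl. unfold HF, PiF. apply Derive_const. Qed.
Lemma dH2 : dpart 2 (HF n ai eps xi) a y pa py = HpV rr a pa.
Proof.
  simpl. apply is_derive_unique. unfold HF, PiF.
  auto_derive; [exact I|]. unfold HpV, rr, rrf. ring.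
Qed.
Lemma dH3 : dpart 3 (HF n ai eps xi) a y pa py = 2 * a * py.
Proof.
  simpl. apply is_derive_unique. unfold HF, PiF.
  auto_derive; [exact I|]. ring.
Qed.


Hypothesis Hx : xdot n ai eps xi a <> 0.

Lemma rr_x : rr a * xdot n ai eps xi a = a.
Proof. unfold rr, rrf. field. exact Hx. Qed.

Lemma XG : HtV rr r' a pa py * rsum 0 (S n) (fun k => DPv rr (fun _ => Acoef n ai (n - k)) a pa py (py^(2*k)) (n-k) 0)
  - HpV rr a pa * rsum 0 (S n) (fun k => DTv rr r' (fun _ => Acoef n ai (n - k)) 0 a pa py (py^(2*k)) (n-k) 0) = 0.
Proof. rewrite Xsum. apply rsum_zero. intros k Hk. rewrite key_id. simpl. ring. Qed.

Lemma XQ1 : HtV rr r' a pa py * rsum 1 n (fun k => DPv rr (btil n ai eps xi k) a pa py (py^(2*k-1)) (n-k) 1)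
  - HpV rr a pa * rsum 1 n (fun k => DTv rr r' (btil n ai eps xi k) (Bd n ai eps xi k a) a pa py (py^(2*k-1)) (n-k) 1)
  = 2 * a * py * GF n ai eps xi a y pa py.
Proof.
  rewrite Xsum.
  transitivity (rr a * rsum 1 n (fun k => py^(2*k-1) * Hv rr a pa py ^ (n-k) *
     (Bh n ai eps xi k a * py^2 - 2 * Bdh n ai eps xi k a * (rr a * pa)^2))).
  { rewrite <- rsum_scal. apply rsum_ext. intros k Hk. rewrite key_id.
    destruct k as [|k]; [lia|].
    rewrite btil_Bh, Bd_Bdh.
    simpl. ring. }
  rewrite (tele n (fun k => Bh n ai eps xi k a) (fun k => Bdh n ai eps xi k a) (Acoef n ai) (xdot n ai eps xi a) a
     (Hv rr a pa py) py (rr a * pa)).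
  - unfold GF. transitivity (2 * (rr a * xdot n ai eps xi a) * py *
       rsum 0 (S n) (fun k => Acoef n ai (n - k) * Hv rr a pa py ^ (n - k) * py ^ (2 * k))); [ring|].
    rewrite rr_x. reflexivity.
  - reflexivity.
  - unfold Bh. simpl. rewrite rsum_zero; [ring|]. intros; unfold sp; simpl; ring.
  - unfold Bdh. simpl. rewrite rsum_zero; [ring|]. intros; unfold sp; simpl; ring.
  - unfold Bdh. rewrite rsum_zero; [ring|]. intros k Hk. unfold sp. rewrite sp_top by lia. ring.
  - intros k Hk. apply S1id; auto.
Qed.

Lemma XQ2 : HtV rr r' a pa py * rsum 1 n (fun k => DPv rr (ctil n ai eps xi k) a pa py (py^(2*k)) (n-k) 0)
  - HpV rr a pa * rsum 1 n (fun k => DTv rr r' (ctil n ai eps xi k) (Cd n ai eps xi k a) a pa py (py^(2*k)) (n-k) 0)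
  = 2 * a * py * Q1F n ai eps xi a y pa py.
Proof.
  rewrite Xsum. unfold Q1F. rewrite <- rsum_scal. apply rsum_ext. intros k Hk. rewrite key_id.
  rewrite S2id by auto.
  destruct k as [|k]; [lia|].
  transitivity (2 * (rr a * xdot n ai eps xi a) * py * (btil n ai eps xi (S k) a * Hv rr a pa py ^ (n - S k)
     * (rr a * pa) * py ^ (2 * S k - 1))).
  { rewrite (pow_split py (2 * S k) 1 (2 * S k - 1)) by lia. simpl. ring. }
  rewrite rr_x. reflexivity.
Qed.

Lemma brS1 : pbracket (HF n ai eps xi) (S1F n ai eps xi) a y pa py = 0.
Proof.
  unfold pbracket. rewrite dH0, dH1, dH2, dH3.
  set (P1 := rsum 1 n (fun k => DPv rr (btil n ai eps xi k) a pa py (py^(2*k-1)) (n-k) 1)).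
  set (T1 := rsum 1 n (fun k => DTv rr r' (btil n ai eps xi k) (Bd n ai eps xi k a) a pa py (py^(2*k-1)) (n-k) 1)).
  set (PG := rsum 0 (S n) (fun k => DPv rr (fun _ => Acoef n ai (n - k)) a pa py (py^(2*k)) (n-k) 0)).
  set (TG := rsum 0 (S n) (fun k => DTv rr r' (fun _ => Acoef n ai (n - k)) 0 a pa py (py^(2*k)) (n-k) 0)).
  assert (D2 : dpart 2 (S1F n ai eps xi) a y pa py = P1 + y * PG).
  { simpl. apply is_derive_unique. unfold S1F. apply @is_derive_plus. apply dQ1_p. apply is_derive_scal, dG_p. }
  assert (D0 : dpart 0 (S1F n ai eps xi) a y pa py = T1 + y * TG).
  { simpl. apply is_derive_unique. unfold S1F. apply @is_derive_plus. apply dQ1_t. apply is_derive_scal, dG_t. }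
  assert (D1 : dpart 1 (S1F n ai eps xi) a y pa py = GF n ai eps xi a y pa py).
  { simpl. apply is_derive_unique. unfold S1F.
    apply (is_derive_ext (fun t => Q1F n ai eps xi a y pa py + t * GF n ai eps xi a y pa py)); [intro; reflexivity|].
    auto_derive; [exact I|ring]. }
  rewrite D0, D1, D2.
  transitivity ((HtV rr r' a pa py * P1 - HpV rr a pa * T1) + y * (HtV rr r' a pa py * PG - HpV rr a pa * TG)
     - 2 * a * py * GF n ai eps xi a y pa py); [ring|].
  unfold P1, T1, PG, TG. rewrite XQ1, XG. ring.
Qed.

Lemma brS2 : pbracket (HF n ai eps xi) (S2F n ai eps xi) a y pa py = 0.
Proof.
  unfold pbracket. rewrite dH0, dH1, dH2, dH3.
  set (P1 := rsum 1 n (fun k => DPv rr (btil n ai eps xi k) a pa py (py^(2*k-1)) (n-k) 1)).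
  set (T1 := rsum 1 n (fun k => DTv rr r' (btil n ai eps xi k) (Bd n ai eps xi k a) a pa py (py^(2*k-1)) (n-k) 1)).
  set (PG := rsum 0 (S n) (fun k => DPv rr (fun _ => Acoef n ai (n - k)) a pa py (py^(2*k)) (n-k) 0)).
  set (TG := rsum 0 (S n) (fun k => DTv rr r' (fun _ => Acoef n ai (n - k)) 0 a pa py (py^(2*k)) (n-k) 0)).
  set (P2 := rsum 1 n (fun k => DPv rr (ctil n ai eps xi k) a pa py (py^(2*k)) (n-k) 0)).
  set (T2 := rsum 1 n (fun k => DTv rr r' (ctil n ai eps xi k) (Cd n ai eps xi k a) a pa py (py^(2*k)) (n-k) 0)).
  assert (D2 : dpart 2 (S2F n ai eps xi) a y pa py = P2 + y * P1 + y ^ 2 / 2 * PG).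
  { simpl. apply is_derive_unique. unfold S2F. apply @is_derive_plus. apply @is_derive_plus. apply dQ2_p.
    apply is_derive_scal, dQ1_p. apply is_derive_scal, dG_p. }
  assert (D0 : dpart 0 (S2F n ai eps xi) a y pa py = T2 + y * T1 + y ^ 2 / 2 * TG).
  { simpl. apply is_derive_unique. unfold S2F. apply @is_derive_plus. apply @is_derive_plus. apply dQ2_t.
    apply is_derive_scal, dQ1_t. apply is_derive_scal, dG_t. }
  assert (D1 : dpart 1 (S2F n ai eps xi) a y pa py = Q1F n ai eps xi a y pa py + y * GF n ai eps xi a y pa py).
  { simpl. apply is_derive_unique. unfold S2F.
    apply (is_derive_ext (fun t => Q2F n ai eps xi a y pa py + t * Q1F n ai eps xi a y pa py
        + t ^ 2 / 2 * GF n ai eps xi a y pa py)); [intro; reflexivity|].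
    auto_derive; [exact I|field]. }
  rewrite D0, D1, D2.
  transitivity ((HtV rr r' a pa py * P2 - HpV rr a pa * T2)
     + y * (HtV rr r' a pa py * P1 - HpV rr a pa * T1)
     + y ^ 2 / 2 * (HtV rr r' a pa py * PG - HpV rr a pa * TG)
     - 2 * a * py * (Q1F n ai eps xi a y pa py + y * GF n ai eps xi a y pa py)); [ring|].
  unfold P1, T1, PG, TG, P2, T2. rewrite XQ2, XQ1, XG. ring.
Qed.

End Main.


Lemma dS1_1 n ai eps xi a y pa py : dpart 1 (S1F n ai eps xi) a y pa py = GF n ai eps xi a y pa py.
Proof.
  simpl. apply is_derive_unique. unfold S1F.
  apply (is_derive_ext (fun t => Q1F n ai eps xi a y pa py + t * GF n ai eps xi a y pa py)); [intro; reflexivity|].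
  auto_derive; [exact I|ring].
Qed.
Lemma dS2_1 n ai eps xi a y pa py : dpart 1 (S2F n ai eps xi) a y pa py = Q1F n ai eps xi a y pa py + y * GF n ai eps xi a y pa py.
Proof.
  simpl. apply is_derive_unique. unfold S2F.
  apply (is_derive_ext (fun t => Q2F n ai eps xi a y pa py + t * Q1F n ai eps xi a y pa py
      + t ^ 2 / 2 * GF n ai eps xi a y pa py)); [intro; reflexivity|].
  auto_derive; [exact I|field].
Qed.
Lemma dPy0 c a y pa py : (c < 3)%nat -> dpart c PyF a y pa py = 0.
Proof.
  intro H. destruct c as [|[|[|c]]]; simpl; unfold PyF; try apply Derive_const. lia.
Qed.
Lemma dPy3 a y pa py : dpart 3 PyF a y pa py = 1.
Proof. simpl. unfold PyF. apply is_derive_unique. auto_derive; auto. Qed.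
Lemma GF_at n ai eps xi a y pa : GF n ai eps xi a y pa 0 = HF n ai eps xi a y pa 0 ^ n.
Proof.
  unfold GF. rewrite rsum_cons. rewrite rsum_zero.
  - rewrite Nat.sub_0_r, Acoef_top. simpl. ring.
  - intros k Hk. destruct k; [lia|]. rewrite (pow_split 0 (2 * S k) 1 (2 * S k - 1)) by lia. simpl. ring.
Qed.
Lemma Q1F_at n ai eps xi a y pa : Q1F n ai eps xi a y pa 0 = 0.
Proof.
  unfold Q1F. apply rsum_zero. intros k Hk. destruct k; [lia|].
  rewrite (pow_split 0 (2 * S k - 1) 1 (2 * S k - 2)) by lia. simpl. ring.
Qed.

Theorem theorem1
  (n : nat) (ai eps xi : nat -> R) (I : R -> Prop)
  (Hn : (2 <= n)%nat)
  (Hdist : forall i j, (i < n)%nat -> (j < n)%nat -> i <> j -> ai i <> ai j)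
  (Heps : forall i, (i < n)%nat -> eps i = 1 \/ eps i = -1)
  (HIopen : open I)
  (HIint : forall u v w, I u -> I w -> u <= v <= w -> I v)
  (HIne : exists a0, I a0)
  (HIpos : forall a, I a -> 0 < a)
  (HDelta : forall a i, I a -> (i < n)%nat -> 0 < Deltai ai eps i a)
  (Hxdot : forall a, I a -> xdot n ai eps xi a <> 0) :
  (forall a y pa py, I a ->
      pbracket (HF n ai eps xi) PyF a y pa py = 0 /\
      pbracket (HF n ai eps xi) (S1F n ai eps xi) a y pa py = 0 /\
      pbracket (HF n ai eps xi) (S2F n ai eps xi) a y pa py = 0) /\
  func_indep I (HF n ai eps xi) PyF (S1F n ai eps xi) /\
  func_indep I (HF n ai eps xi) PyF (S2F n ai eps xi).
Proof.
  split; [|split].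
  - intros a y pa py Ha.
    assert (HD : forall i, (i < n)%nat -> 0 < Deltai ai eps i a) by (intros; apply HDelta; auto).
    pose proof (ex_derive_rr n ai eps xi I a HIopen Ha HDelta (Hxdot a Ha)) as Hex.
    pose proof (Derive_correct _ _ Hex) as Hr.
    fold (rrf n ai eps xi) in Hr.
    split; [|split].
    + unfold pbracket. rewrite (dPy0 0), (dPy0 1), (dPy0 2), dPy3 by lia. rewrite (dH1 n ai eps xi a y pa py). ring.
    + eapply brS1; eauto.
    + eapply brS2; eauto.
  - destruct HIne as [a0 Ha0]. exists a0, 1, 1, 0. split; [exact Ha0|].
    exists 1%nat, 2%nat, 3%nat. split; [lia|]. split; [lia|]. split; [lia|].
    unfold wedge3_comp, det3. rewrite (dPy0 1), (dPy0 2), dPy3 by lia.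
    rewrite dS1_1, GF_at, (dH1 n ai eps xi a0 1 1 0), (dH3 n ai eps xi a0 1 1 0).
    pose proof (ex_derive_rr n ai eps xi I a0 HIopen Ha0 HDelta (Hxdot a0 Ha0)) as Hex.
    pose proof (Derive_correct _ _ Hex) as Hr. fold (rrf n ai eps xi) in Hr.
    rewrite (dH2 n ai eps xi a0 1 1 0).
    unfold HpV, HF, PiF, rrf.
    assert (Hq : a0 / xdot n ai eps xi a0 <> 0).
    { pose proof (HIpos a0 Ha0). pose proof (Hxdot a0 Ha0). unfold Rdiv. apply Rmult_integral_contrapositive; split; [lra|]. apply Rinv_neq_0_compat; auto. }
    intro Hz. apply Hq.
    assert (Hz' : 2 * (a0 / xdot n ai eps xi a0) ^ 2 * ((a0 / xdot n ai eps xi a0) ^ 2) ^ n = 0).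
    { rewrite <- Hz. replace ((a0 / xdot n ai eps xi a0 * 1) ^ 2 + a0 * 0 ^ 2) with ((a0 / xdot n ai eps xi a0) ^ 2) by ring. ring. }
    exfalso. revert Hz'. apply Rmult_integral_contrapositive; split.
    + apply Rmult_integral_contrapositive; split; [lra|]. apply pow_nonzero; auto.
    + apply pow_nonzero, pow_nonzero; auto.
  - destruct HIne as [a0 Ha0]. exists a0, 1, 1, 0. split; [exact Ha0|].
    exists 1%nat, 2%nat, 3%nat. split; [lia|]. split; [lia|]. split; [lia|].
    unfold wedge3_comp, det3. rewrite (dPy0 1), (dPy0 2), dPy3 by lia.
    rewrite dS2_1, GF_at, Q1F_at, (dH1 n ai eps xi a0 1 1 0), (dH3 n ai eps xi a0 1 1 0).
    pose proof (ex_derive_rr n ai eps xi I a0 HIopen Ha0 HDelta (Hxdot a0 Ha0)) as Hex.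
    pose proof (Derive_correct _ _ Hex) as Hr. fold (rrf n ai eps xi) in Hr.
    rewrite (dH2 n ai eps xi a0 1 1 0).
    unfold HpV, HF, PiF, rrf.
    assert (Hq : a0 / xdot n ai eps xi a0 <> 0).
    { pose proof (HIpos a0 Ha0). pose proof (Hxdot a0 Ha0). unfold Rdiv. apply Rmult_integral_contrapositive; split; [lra|]. apply Rinv_neq_0_compat; auto. }
    intro Hz. apply Hq.
    assert (Hz' : 2 * (a0 / xdot n ai eps xi a0) ^ 2 * ((a0 / xdot n ai eps xi a0) ^ 2) ^ n = 0).
    { rewrite <- Hz. replace ((a0 / xdot n ai eps xi a0 * 1) ^ 2 + a0 * 0 ^ 2) with ((a0 / xdot n ai eps xi a0) ^ 2) by ring. ring. }
    exfalso. revert Hz'. apply Rmult_integral_contrapositive; split.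
    + apply Rmult_integral_contrapositive; split; [lra|]. apply pow_nonzero; auto.
    + apply pow_nonzero, pow_nonzero; auto.
Qed.
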